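(* The contravariant functors $\mathrm{ClpUp}$ and $\mathrm{Pf}$ establish a dual equivalence $\mathsf{CHA} \equiv^{op} \mathsf{CES}$ between the category of conditional Heyting algebras and the category of conditional Esakia spaces.
   Context: A conditional Heyting algebra is a Heyting algebra $(A,\top,\bot,\wedge,\vee,\to)$ with a binary operator $\mathrel{\Box\!\!\!\rightarrow}$ satisfying $a \mathrel{\Box\!\!\!\rightarrow} (b\wedge c) = (a\mathrel{\Box\!\!\!\rightarrow} b)\wedge(a\mathrel{\Box\!\!\!\rightarrow} c)$ and $a\mathrel{\Box\!\!\!\rightarrow}\top=\top$; morphisms ($\mathsf{CHA}$) are Heyting homomorphisms preserving $\mathrel{\Box\!\!\!\rightarrow}$. An Esakia space is a nonempty poset $(X,\leq)$ with a compact topology $\tau$ such that $x\not\leq y$ implies some clopen upset contains $x$ but not $y$, and ${\downarrow}a$ is clopen for each clopen $a$. A conditional Esakia space is an Esakia space $(X,\leq,\tau)$ with relations $\mathcal{R}=\{R_a \mid a \text{ a clopen upset}\}$ such that: $a \Rightarrow_c b := \{x \mid R_a[x]\subseteq b\}$ is clopen for all clopen upsets $a,b$; $(\leq\circ R_a\circ\leq)=R_a$; and $R_a[x]$ is closed for all $x$. Morphisms ($\mathsf{CES}$) are continuous bounded morphisms $f$ (order-preserving, and $f(x)\leq' z'$ implies $z'=f(z)$ for some $z\geq x$) such that for all clopen upsets $a'$: $xR_{f^{-1}(a')}y$ implies $f(x)R_{a'}f(y)$, and $f(x)R_{a'}z'$ implies there is $z$ with $xR_{f^{-1}(a')}z$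 and $f(z)\leq' z'$. The functor $\mathrm{ClpUp}$ sends a conditional Esakia space to the conditional Heyting algebra of its clopen upsets with $X,\emptyset,\cap,\cup$, implication $a\Rightarrow b = X\setminus{\downarrow}(a\setminus b)$ and conditional $\Rightarrow_c$ above, and a morphism $f$ to $f^{-1}$. The functor $\mathrm{Pf}$ sends a conditional Heyting algebra $A$ to its set of prime filters ordered by inclusion, with topology generated by the sets $\theta(a)=\{p \mid a\in p\}$ and their complements, and relations $x R_{\theta(a)} y$ iff $\{b\in A\mid a\mathrel{\Box\!\!\!\rightarrow} b\in x\}\subseteq y$; it sends a homomorphism $h$ to $h^{-1}$. *)

(* Defs.v *)
From Stdlib Require Import List Classical.

Record CHAdata := {
  cha_car :> Type;
  cha_top : cha_car;
  cha_bot : cha_car;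
  cha_meet : cha_car -> cha_car -> cha_car;
  cha_join : cha_car -> cha_car -> cha_car;
  cha_imp : cha_car -> cha_car -> cha_car;
  cha_cond : cha_car -> cha_car -> cha_car
}.

Arguments cha_top {c}.
Arguments cha_bot {c}.
Arguments cha_meet {c} _ _.
Arguments cha_join {c} _ _.
Arguments cha_imp {c} _ _.
Arguments cha_cond {c} _ _.

Definition cha_le {A : CHAdata} (a b : A) : Prop := cha_meet a b = a.

Record is_CHA (A : CHAdata) : Prop := {
  meet_assoc : forall a b c : A, cha_meet a (cha_meet b c) = cha_meet (cha_meet a b) c;
  meet_comm : forall a b : A, cha_meet a b = cha_meet b a;
  join_assoc : forall a b c : A, cha_join a (cha_join b c) = cha_join (cha_join a b) c;
  join_comm : forall a b : A, cha_join a b = cha_join b a;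
  meet_join_absorb : forall a b : A, cha_meet a (cha_join a b) = a;
  join_meet_absorb : forall a b : A, cha_join a (cha_meet a b) = a;
  meet_top : forall a : A, cha_meet a cha_top = a;
  join_bot : forall a : A, cha_join a cha_bot = a;
  imp_residual : forall a b c : A, cha_le (cha_meet a b) c <-> cha_le a (cha_imp b c);
  top_neq_bot : (cha_top : A) <> cha_bot;
  cond_meet : forall a b c : A,
      cha_cond a (cha_meet b c) = cha_meet (cha_cond a b) (cha_cond a c);
  cond_top : forall a : A, cha_cond a cha_top = cha_top
}.

Record is_CHA_hom (A B : CHAdata) (h : A -> B) : Prop := {
  hom_top : h cha_top = cha_top;
  hom_bot : h cha_bot = cha_bot;
  hom_meet : forall a b, h (cha_meet a b) = cha_meet (h a) (h b);
  hom_join : forall a b, h (cha_join a b) = cha_join (h a) (h b);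
  hom_imp : forall a b, h (cha_imp a b) = cha_imp (h a) (h b);
  hom_cond : forall a b, h (cha_cond a b) = cha_cond (h a) (h b)
}.

Definition CHA_iso (A B : CHAdata) (h : A -> B) : Prop :=
  is_CHA_hom A B h /\
  exists g : B -> A, is_CHA_hom B A g /\
    (forall a, g (h a) = a) /\ (forall b, h (g b) = b).

(* A set with a binary relation, a topology (given by its open sets),
   and a family of relations R_U indexed by subsets U (only the R_a for
   clopen upsets a are ever used). *)
Record CESdata := {
  ces_car :> Type;
  ces_le : ces_car -> ces_car -> Prop;
  ces_open : (ces_car -> Prop) -> Prop;
  ces_R : (ces_car -> Prop) -> ces_car -> ces_car -> Prop;
  ces_open_full : ces_open (fun _ => True);
  ces_open_inter : forall U V, ces_open U -> ces_open V -> ces_open (fun x => U x /\ V x);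
  ces_open_union : forall F : (ces_car -> Prop) -> Prop,
      (forall U, F U -> ces_open U) -> ces_open (fun x => exists U, F U /\ U x);
  ces_open_ext : forall U V, (forall x, U x <-> V x) -> ces_open U -> ces_open V
}.

Arguments ces_le {c} _ _.
Arguments ces_open {c} _.
Arguments ces_R {c} _ _ _.

Definition clopen {X : CESdata} (U : X -> Prop) : Prop :=
  ces_open U /\ ces_open (fun x => ~ U x).
Definition upset {X : CESdata} (U : X -> Prop) : Prop :=
  forall x y, ces_le x y -> U x -> U y.
Definition clopen_up {X : CESdata} (U : X -> Prop) : Prop := clopen U /\ upset U.
Definition downset {X : CESdata} (U : X -> Prop) : X -> Prop :=
  fun x => exists y, ces_le x y /\ U y.
Definition compact (X : CESdata) : Prop :=
  forall F : (X -> Prop) -> Prop, (forall U, F U -> ces_open U) ->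
    (forall x, exists U, F U /\ U x) ->
    exists l : list (X -> Prop), (forall U, In U l -> F U) /\
                                 (forall x, exists U, In U l /\ U x).
Definition cboxset {X : CESdata} (a b : X -> Prop) : X -> Prop :=
  fun x => forall y, ces_R a x y -> b y.

Record is_CES (X : CESdata) : Prop := {
  ces_nonempty : inhabited X;
  le_refl : forall x : X, ces_le x x;
  le_trans : forall x y z : X, ces_le x y -> ces_le y z -> ces_le x z;
  le_antisym : forall x y : X, ces_le x y -> ces_le y x -> x = y;
  ces_compact : compact X;
  ces_separation : forall x y : X, ~ ces_le x y ->
      exists a : X -> Prop, clopen_up a /\ a x /\ ~ a y;
  ces_down_clopen : forall a : X -> Prop, clopen a -> clopen (downset a);
  ces_cbox_clopen : forall a b : X -> Prop, clopen_up a -> clopen_up b ->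
      clopen (cboxset a b);
  ces_R_le : forall a : X -> Prop, clopen_up a -> forall x y : X,
      (exists x' y', ces_le x x' /\ ces_R a x' y' /\ ces_le y' y) <-> ces_R a x y;
  ces_R_closed : forall a : X -> Prop, clopen_up a -> forall x : X,
      ces_open (fun y => ~ ces_R a x y)
}.

Record is_CES_mor (X Y : CESdata) (f : X -> Y) : Prop := {
  mor_cont : forall U : Y -> Prop, ces_open U -> ces_open (fun x => U (f x));
  mor_mono : forall x y : X, ces_le x y -> ces_le (f x) (f y);
  mor_bounded : forall (x : X) (z' : Y), ces_le (f x) z' ->
      exists z, ces_le x z /\ f z = z';
  mor_R_forth : forall a' : Y -> Prop, clopen_up a' -> forall x y : X,
      ces_R (fun u => a' (f u)) x y -> ces_R a' (f x) (f y);
  mor_R_back : forall a' : Y -> Prop, clopen_up a' -> forall (x : X) (z' : Y),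
      ces_R a' (f x) z' ->
      exists z, ces_R (fun u => a' (f u)) x z /\ ces_le (f z) z'
}.

Definition CES_iso (X Y : CESdata) (f : X -> Y) : Prop :=
  is_CES_mor X Y f /\
  exists g : Y -> X, is_CES_mor Y X g /\
    (forall x, g (f x) = x) /\ (forall y, f (g y) = y).

Lemma open_empty (X : CESdata) : ces_open (fun _ : X => False).
Proof.
  apply (ces_open_ext X (fun x => exists U, (fun _ : X -> Prop => False) U /\ U x)).
  - intro x; split; [intros [U [[] _]] | intros []].
  - apply ces_open_union; intros U [].
Qed.

Lemma open_union2 (X : CESdata) (U V : X -> Prop) :
  ces_open U -> ces_open V -> ces_open (fun x => U x \/ V x).
Proof.
  intros HU HV.
  apply (ces_open_ext X (fun x => exists W, (W = U \/ W = V) /\ W x)).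
  - intro x; split.
    + intros [W [[-> | ->] H]]; auto.
    + intros [H|H]; eauto.
  - apply ces_open_union; intros W [-> | ->]; auto.
Qed.

Definition ClpT (X : CESdata) : Type := { a : X -> Prop | clopen_up a }.

Lemma clopen_up_full (X : CESdata) : clopen_up (fun _ : X => True).
Proof.
  split; [split|].
  - apply ces_open_full.
  - apply (ces_open_ext X (fun _ => False)); [intro; tauto | apply open_empty].
  - intros ? ? ? ?; auto.
Qed.

Lemma clopen_up_empty (X : CESdata) : clopen_up (fun _ : X => False).
Proof.
  split; [split|].
  - apply open_empty.
  - apply (ces_open_ext X (fun _ => True)); [intro; tauto | apply ces_open_full].
  - intros ? ? ? ?; auto.
Qed.

Lemma clopen_up_meet (X : CESdata) (a b : X -> Prop) :
  clopen_up a -> clopen_up b -> clopen_up (fun x => a x /\ b x).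
Proof.
  intros [[Ha Hna] Ua] [[Hb Hnb] Ub]; split; [split|].
  - apply ces_open_inter; auto.
  - apply (ces_open_ext X (fun x => ~ a x \/ ~ b x)).
    + intro x; split; [tauto|]. intro H; destruct (classic (a x)); tauto.
    + apply open_union2; auto.
  - intros x y Hxy [H1 H2]; split; eauto.
Qed.

Lemma clopen_up_join (X : CESdata) (a b : X -> Prop) :
  clopen_up a -> clopen_up b -> clopen_up (fun x => a x \/ b x).
Proof.
  intros [[Ha Hna] Ua] [[Hb Hnb] Ub]; split; [split|].
  - apply open_union2; auto.
  - apply (ces_open_ext X (fun x => ~ a x /\ ~ b x)).
    + intro x; tauto.
    + apply ces_open_inter; auto.
  - intros x y Hxy [H|H]; [left|right]; eauto.
Qed.

Definition imp_set {X : CESdata} (a b : X -> Prop) : X -> Prop :=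
  fun x => ~ downset (fun y => a y /\ ~ b y) x.

Lemma clopen_up_imp (X : CESdata) (HX : is_CES X) (a b : X -> Prop) :
  clopen_up a -> clopen_up b -> clopen_up (imp_set a b).
Proof.
  intros [[Ha Hna] Ua] [[Hb Hnb] Ub].
  assert (Hc : clopen (fun y => a y /\ ~ b y)).
  { split.
    - apply ces_open_inter; auto.
    - apply (ces_open_ext X (fun x => ~ a x \/ b x)).
      + intro x; split; [tauto|]. intro H; destruct (classic (a x)); destruct (classic (b x)); tauto.
      + apply open_union2; auto. }
  destruct (ces_down_clopen X HX _ Hc) as [Hd Hnd].
  split; [split|].
  - exact Hnd.
  - apply (ces_open_ext X (downset (fun y => a y /\ ~ b y))); [|exact Hd].
    intro x; unfold imp_set; split; [tauto|]. apply NNPP.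
  - intros x y Hxy Hx [z [Hyz Hz]]. apply Hx. exists z; split; [|exact Hz].
    eapply (le_trans X HX); eauto.
Qed.

Lemma clopen_up_cbox (X : CESdata) (HX : is_CES X) (a b : X -> Prop) :
  clopen_up a -> clopen_up b -> clopen_up (cboxset a b).
Proof.
  intros Ha Hb; split.
  - apply (ces_cbox_clopen X HX); auto.
  - intros x x' Hxx' Hx y Hy. apply Hx.
    apply (ces_R_le X HX a Ha). exists x', y; repeat split; auto.
    apply (le_refl X HX).
Qed.

Definition ClpUp (X : CESdata) (HX : is_CES X) : CHAdata := {|
  cha_car := ClpT X;
  cha_top := exist _ _ (clopen_up_full X);
  cha_bot := exist _ _ (clopen_up_empty X);
  cha_meet := fun a b => exist _ _ (clopen_up_meet X _ _ (proj2_sig a) (proj2_sig b));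
  cha_join := fun a b => exist _ _ (clopen_up_join X _ _ (proj2_sig a) (proj2_sig b));
  cha_imp := fun a b => exist _ _ (clopen_up_imp X HX _ _ (proj2_sig a) (proj2_sig b));
  cha_cond := fun a b => exist _ _ (clopen_up_cbox X HX _ _ (proj2_sig a) (proj2_sig b))
|}.

Lemma clopen_up_preim (X Y : CESdata) (f : X -> Y) (Hf : is_CES_mor X Y f)
  (a : Y -> Prop) : clopen_up a -> clopen_up (fun x => a (f x)).
Proof.
  intros [[Ho Hno] Hu]; split; [split|].
  - exact (mor_cont X Y f Hf a Ho).
  - exact (mor_cont X Y f Hf (fun y => ~ a y) Hno).
  - intros x y Hxy Hx. exact (Hu _ _ (mor_mono X Y f Hf x y Hxy) Hx).
Qed.

Definition clp_mor (X Y : CESdata) (f : X -> Y) (Hf : is_CES_mor X Y f) :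
  ClpT Y -> ClpT X :=
  fun a => exist _ (fun x => proj1_sig a (f x))
                 (clopen_up_preim X Y f Hf _ (proj2_sig a)).

Record prime_filter (A : CHAdata) (p : A -> Prop) : Prop := {
  pf_top : p cha_top;
  pf_up : forall a b, p a -> cha_le a b -> p b;
  pf_meet : forall a b, p a -> p b -> p (cha_meet a b);
  pf_proper : ~ p cha_bot;
  pf_prime : forall a b, p (cha_join a b) -> p a \/ p b
}.

Definition PfT (A : CHAdata) : Type := { p : A -> Prop | prime_filter A p }.

Definition theta (A : CHAdata) (a : A) : PfT A -> Prop := fun p => proj1_sig p a.

Inductive gen_open {T : Type} (S : (T -> Prop) -> Prop) : (T -> Prop) -> Prop :=
| go_sub : forall U, S U -> gen_open S U
| go_full : gen_open S (fun _ => True)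
| go_inter : forall U V, gen_open S U -> gen_open S V -> gen_open S (fun x => U x /\ V x)
| go_union : forall F : (T -> Prop) -> Prop, (forall U, F U -> gen_open S U) ->
    gen_open S (fun x => exists U, F U /\ U x)
| go_ext : forall U V, (forall x, U x <-> V x) -> gen_open S U -> gen_open S V.

Definition Pf_subbasis (A : CHAdata) (U : PfT A -> Prop) : Prop :=
  exists a : A, (forall p, U p <-> theta A a p) \/ (forall p, U p <-> ~ theta A a p).

Definition Pf_R (A : CHAdata) (U : PfT A -> Prop) (x y : PfT A) : Prop :=
  exists a : A, (forall p, U p <-> theta A a p) /\
    (forall b : A, proj1_sig x (cha_cond a b) -> proj1_sig y b).

Definition Pf (A : CHAdata) : CESdata := {|
  ces_car := PfT A;
  ces_le := fun p q => forall a, proj1_sig p a -> proj1_sig q a;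
  ces_open := gen_open (Pf_subbasis A);
  ces_R := Pf_R A;
  ces_open_full := go_full _;
  ces_open_inter := go_inter _;
  ces_open_union := go_union _;
  ces_open_ext := go_ext _
|}.

Lemma prime_filter_preim (A B : CHAdata) (h : A -> B) (Hh : is_CHA_hom A B h)
  (p : B -> Prop) : prime_filter B p -> prime_filter A (fun a => p (h a)).
Proof.
  intros [Pt Pu Pm Pb Pp]; split.
  - rewrite (hom_top A B h Hh); exact Pt.
  - intros a b Ha Hab. apply (Pu (h a)); auto. unfold cha_le in *.
    rewrite <- (hom_meet A B h Hh), Hab; reflexivity.
  - intros a b Ha Hb; rewrite (hom_meet A B h Hh); auto.
  - rewrite (hom_bot A B h Hh); exact Pb.
  - intros a b H; rewrite (hom_join A B h Hh) in H; auto.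
Qed.

Definition pf_mor (A B : CHAdata) (h : A -> B) (Hh : is_CHA_hom A B h) :
  PfT B -> PfT A :=
  fun p => exist _ (fun a => proj1_sig p (h a))
                 (prime_filter_preim A B h Hh _ (proj2_sig p)).

(* Main.v *)
Require Import Defs.
From Stdlib Require Import List Classical ClassicalEpsilon FunctionalExtensionality PropExtensionality ProofIrrelevance.

Lemma pred_ext {T : Type} (P Q : T -> Prop) : (forall x, P x <-> Q x) -> P = Q.
Proof. intro H; apply functional_extensionality; intro x; apply propositional_extensionality; apply H. Qed.

Lemma sig_ext {T : Type} {P : T -> Prop} (x y : sig P) : proj1_sig x = proj1_sig y -> x = y.
Proof. destruct x as [x Hx], y as [y Hy]; simpl; intros ->; f_equal; apply proof_irrelevance. Qed.

Definition sub {T : Type} (X Y : T -> Prop) := forall t, X t -> Y t.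
Definition chain {T : Type} (C : (T -> Prop) -> Prop) := forall X Y, C X -> C Y -> sub X Y \/ sub Y X.
Definition supc {T : Type} (x0 : T -> Prop) (C : (T -> Prop) -> Prop) : T -> Prop :=
  fun t => x0 t \/ exists X, C X /\ X t.

Inductive tower {T : Type} (succ : (T -> Prop) -> (T -> Prop)) (x0 : T -> Prop) : (T -> Prop) -> Prop :=
| tw_succ : forall X, tower succ x0 X -> tower succ x0 (succ X)
| tw_sup : forall C, (forall X, C X -> tower succ x0 X) -> chain C -> tower succ x0 (supc x0 C).

Lemma sub_antisym {T : Type} (X Y : T -> Prop) : sub X Y -> sub Y X -> X = Y.
Proof. intros H1 H2; apply pred_ext; intro; split; auto. Qed.

Lemma tower_chain {T : Type} (succ : (T -> Prop) -> (T -> Prop)) (x0 : T -> Prop)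
  (Hge : forall X, tower succ x0 X -> sub X (succ X)) :
  chain (tower succ x0).
Proof.
  set (extreme := fun c => forall x, tower succ x0 x -> sub x c -> x = c \/ sub (succ x) c).
  assert (Hx0 : forall X, tower succ x0 X -> sub x0 X).
  { intros X HX; induction HX as [X HX IH|C HC IH Hch].
    - intros t Ht; apply Hge; auto.
    - intros t Ht; left; auto. }
  assert (L1 : forall c, tower succ x0 c -> extreme c -> forall x, tower succ x0 x -> sub x c \/ sub (succ c) x).
  { intros c Hc Hext x Hx; induction Hx as [y Hy IH|C HC IH Hch].
    - destruct IH as [H|H].
      + destruct (Hext y Hy H) as [->|H'].
        * right; intros t Ht; exact Ht.
        * left; exact H'.
      + right; intros t Ht; apply Hge; auto.
    - destruct (classic (exists X, C X /\ sub (succ c) X)) as [[X [HX Hs]]|Hn].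
      + right; intros t Ht; right; exists X; split; auto.
      + left; intros t [Ht|[X [HX Ht]]].
        * apply (Hx0 c Hc); auto.
        * destruct (IH X HX) as [H|H]; [apply H; auto|].
          exfalso; apply Hn; exists X; auto. }
  assert (L2 : forall c, tower succ x0 c -> extreme c).
  { intros c Hc; induction Hc as [d Hd IH|C HC IH Hch].
    - intros x Hx Hsub. destruct (L1 d Hd IH x Hx) as [H|H].
      + destruct (IH x Hx H) as [->|H'].
        * right; intros t Ht; exact Ht.
        * right; intros t Ht; apply Hge; auto.
      + left; apply sub_antisym; auto.
    - intros x Hx Hsub.
      destruct (classic (forall d, C d -> sub (succ d) x)) as [Hall|Hn].
      + left; apply sub_antisym; auto.
        intros t [Ht|[d [Hd Ht]]].
        * apply (Hx0 x Hx); auto.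
        * apply (Hall d Hd); apply Hge; auto.
      + apply not_all_ex_not in Hn; destruct Hn as [d Hd].
        apply imply_to_and in Hd; destruct Hd as [Hd Hnd].
        destruct (L1 d (HC d Hd) (IH d Hd) x Hx) as [H|H]; [|contradiction].
        destruct (IH d Hd x Hx H) as [->|H'].
        * destruct (L1 d (HC d Hd) (IH d Hd) (supc x0 C) (tw_sup _ _ C HC Hch)) as [H2|H2].
          -- left; apply sub_antisym; auto.
          -- right; exact H2.
        * right; intros t Ht; right; exists d; split; auto. }
  intros X Y HX HY. destruct (L1 Y HY (L2 Y HY) X HX) as [H|H]; auto.
  right; intros t Ht; apply H; apply Hge; auto.
Qed.

Theorem zorn {T : Type} (Q : (T -> Prop) -> Prop) (x0 : T -> Prop)
  (Hsup : forall C, (forall X, C X -> Q X) -> chain C -> Q (supc x0 C)) :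
  exists M, Q M /\ forall Y, Q Y -> sub M Y -> sub Y M.
Proof.
  apply NNPP; intro Hno.
  assert (Hn : forall M, Q M -> exists Y, Q Y /\ sub M Y /\ ~ sub Y M).
  { intros M HM. apply NNPP; intro H. apply Hno. exists M; split; auto.
    intros Y HY HMY. apply NNPP; intro H'. apply H; exists Y; auto. }
  set (succ := fun M => epsilon (inhabits M) (fun Y => Q M -> Q Y /\ sub M Y /\ ~ sub Y M)).
  assert (Hs : forall M, Q M -> Q (succ M) /\ sub M (succ M) /\ ~ sub (succ M) M).
  { intros M HM. unfold succ. apply (epsilon_spec (inhabits M) (fun Y => Q M -> Q Y /\ sub M Y /\ ~ sub Y M)); auto.
    destruct (Hn M HM) as [Y HY]; exists Y; auto. }
  assert (HQ : forall X, tower succ x0 X -> Q X).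
  { intros X HX; induction HX as [X HX IH|C HC IH Hch].
    - apply Hs; auto.
    - apply Hsup; auto. }
  assert (Hge : forall X, tower succ x0 X -> sub X (succ X)).
  { intros X HX; apply Hs; auto. }
  pose proof (tower_chain succ x0 Hge) as Hch.
  assert (Ht : tower succ x0 (supc x0 (tower succ x0))) by (apply tw_sup; auto).
  assert (Ht2 := tw_succ _ _ _ Ht).
  apply (Hs _ (HQ _ Ht)).
  intros t Hx; right; exists (succ (supc x0 (tower succ x0))); auto.
Qed.
Definition bigmeet {B : CHAdata} (l : list B) : B := fold_right cha_meet cha_top l.
Definition bigjoin {B : CHAdata} (l : list B) : B := fold_right cha_join cha_bot l.

Lemma compact_idx (X : CESdata) (HX : compact X) {I : Type} (K : X -> Prop)
  (HK : ces_open (fun x => ~ K x)) (P : I -> Prop) (G : I -> X -> Prop)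
  (HG : forall i, P i -> ces_open (G i)) (Hcov : forall x, K x -> exists i, P i /\ G i x) :
  exists l : list I, (forall i, In i l -> P i) /\ forall x, K x -> exists i, In i l /\ G i x.
Proof.
  set (F := fun U : X -> Prop => (exists i, P i /\ U = G i) \/ U = (fun x => ~ K x)).
  destruct (HX F) as [L [HL1 HL2]].
  - intros U [[i [Hi ->]]| ->]; auto.
  - intro x. destruct (classic (K x)) as [Hk|Hk].
    + destruct (Hcov x Hk) as [i [Hi Hg]]. exists (G i); split; auto. left; exists i; auto.
    + exists (fun x => ~ K x); split; auto. right; reflexivity.
  - assert (Hc : forall L : list (X -> Prop), (forall U, In U L -> F U) ->
       exists l : list I, (forall i, In i l -> P i) /\
         forall x, K x -> (exists U, In U L /\ U x) -> exists i, In i l /\ G i x).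
    { clear HL1 HL2. intro L0; induction L0 as [|U L0 IH]; intro HF.
      - exists nil; split; [intros i []|]. intros x _ [U [[] _]].
      - destruct IH as [l [Hl1 Hl2]]; [intros; apply HF; right; auto|].
        destruct (HF U (or_introl eq_refl)) as [[i [Hi ->]]| ->].
        + exists (i :: l); split.
          * intros j [<-|Hj]; auto.
          * intros x Hx [V [[<-|HV] HVx]]; [exists i; split; [left|]; auto|].
            destruct (Hl2 x Hx) as [j [Hj Hj']]; [exists V; auto|]. exists j; split; [right|]; auto.
        + exists l; split; auto.
          intros x Hx [V [[<-|HV] HVx]]; [contradiction|]. apply Hl2; eauto. }
    destruct (Hc L HL1) as [l [Hl1 Hl2]]. exists l; split; auto.
Qed.



Section Alg.
Context (A : CHAdata) (HA : is_CHA A).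
Local Notation mt := (@cha_meet A).
Local Notation jn := (@cha_join A).
Local Notation im := (@cha_imp A).
Local Notation cd := (@cha_cond A).
Local Notation le := (@cha_le A).
Local Notation tp := (@cha_top A).
Local Notation bt := (@cha_bot A).

Lemma meet_idem (a : A) : mt a a = a.
Proof.
  transitivity (mt a (jn a (mt a a))).
  - rewrite (join_meet_absorb A HA); reflexivity.
  - apply (meet_join_absorb A HA).
Qed.
Lemma le_refl' (a : A) : le a a.
Proof. apply meet_idem. Qed.
Lemma le_trans' (a b c : A) : le a b -> le b c -> le a c.
Proof. unfold cha_le; intros H1 H2. rewrite <- H1, <- (meet_assoc A HA), H2; reflexivity. Qed.
Lemma le_antisym' (a b : A) : le a b -> le b a -> a = b.
Proof. unfold cha_le; intros H1 H2. transitivity (mt a b); [symmetry; exact H1|].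
  rewrite (meet_comm A HA); exact H2. Qed.
Lemma meet_lb1 (a b : A) : le (mt a b) a.
Proof. unfold cha_le. rewrite (meet_comm A HA (mt a b) a), (meet_assoc A HA), meet_idem; reflexivity. Qed.
Lemma meet_lb2 (a b : A) : le (mt a b) b.
Proof. unfold cha_le. rewrite <- (meet_assoc A HA), meet_idem; reflexivity. Qed.
Lemma meet_glb (a b c : A) : le c a -> le c b -> le c (mt a b).
Proof. unfold cha_le; intros H1 H2. rewrite (meet_assoc A HA), H1, H2; reflexivity. Qed.
Lemma le_join_iff (a b : A) : le a b <-> jn a b = b.
Proof.
  unfold cha_le; split; intro H.
  - rewrite <- H, (join_comm A HA), (meet_comm A HA). apply (join_meet_absorb A HA).
  - rewrite <- H. apply (meet_join_absorb A HA).
Qed.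
Lemma join_ub1 (a b : A) : le a (jn a b).
Proof. apply (meet_join_absorb A HA). Qed.
Lemma join_ub2 (a b : A) : le b (jn a b).
Proof. rewrite (join_comm A HA). apply join_ub1. Qed.
Lemma join_lub (a b c : A) : le a c -> le b c -> le (jn a b) c.
Proof.
  rewrite !le_join_iff; intros H1 H2. rewrite <- (join_assoc A HA), H2, H1; reflexivity.
Qed.
Lemma top_max (a : A) : le a tp.
Proof. apply (meet_top A HA). Qed.
Lemma bot_min (a : A) : le bt a.
Proof. apply le_join_iff. rewrite (join_comm A HA). apply (join_bot A HA). Qed.
Lemma meet_mono (a a' b b' : A) : le a a' -> le b b' -> le (mt a b) (mt a' b').
Proof.
  intros H1 H2; apply meet_glb.
  - eapply le_trans'; [apply meet_lb1|auto].
  - eapply le_trans'; [apply meet_lb2|auto].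
Qed.
Lemma join_mono (a a' b b' : A) : le a a' -> le b b' -> le (jn a b) (jn a' b').
Proof.
  intros H1 H2; apply join_lub.
  - eapply le_trans'; [apply H1|apply join_ub1].
  - eapply le_trans'; [apply H2|apply join_ub2].
Qed.
Lemma mp_le (a b : A) : le (mt a (im a b)) b.
Proof.
  rewrite (meet_comm A HA). apply (imp_residual A HA). apply le_refl'.
Qed.
Lemma distr_le (a b c : A) : le (mt a (jn b c)) (jn (mt a b) (mt a c)).
Proof.
  rewrite (meet_comm A HA). apply (imp_residual A HA). apply join_lub; apply (imp_residual A HA).
  - rewrite (meet_comm A HA); apply join_ub1.
  - rewrite (meet_comm A HA); apply join_ub2.
Qed.
Lemma cond_mono (a b c : A) : le b c -> le (cd a b) (cd a c).
Proof.
  unfold cha_le; intro H. rewrite <- (cond_meet A HA), H; reflexivity.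
Qed.

Record filt (F : A -> Prop) : Prop := {
  fi_top : F tp;
  fi_up : forall a b, F a -> le a b -> F b;
  fi_meet : forall a b, F a -> F b -> F (mt a b) }.
Record ideal (I : A -> Prop) : Prop := {
  id_bot : I bt;
  id_down : forall a b, I b -> le a b -> I a;
  id_join : forall a b, I a -> I b -> I (jn a b) }.

Definition mclosed (P : A -> Prop) := P tp /\ forall a b, P a -> P b -> P (mt a b).
Definition gen2 (P1 P2 : A -> Prop) : A -> Prop :=
  fun c => exists e1 e2, P1 e1 /\ P2 e2 /\ le (mt e1 e2) c.

Lemma gen2_filt P1 P2 : mclosed P1 -> mclosed P2 -> filt (gen2 P1 P2).
Proof.
  intros [T1 M1] [T2 M2]; split.
  - exists tp, tp; repeat split; auto. apply top_max.
  - intros a b [e1 [e2 [H1 [H2 H3]]]] Hab. exists e1, e2; repeat split; auto. eapply le_trans'; eauto.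
  - intros a b [e1 [e2 [H1 [H2 H3]]]] [f1 [f2 [G1 [G2 G3]]]].
    exists (mt e1 f1), (mt e2 f2); repeat split; auto.
    apply meet_glb.
    + eapply le_trans'; [|apply H3]. apply meet_mono; apply meet_lb1.
    + eapply le_trans'; [|apply G3]. apply meet_mono; apply meet_lb2.
Qed.

Lemma up_mclosed (a : A) : mclosed (fun e => le a e).
Proof. split; [apply top_max|intros; apply meet_glb; auto]. Qed.
Lemma up_filt (a : A) : filt (fun e => le a e).
Proof. split; [apply top_max| intros; eapply le_trans'; eauto | intros; apply meet_glb; auto]. Qed.
Lemma down_ideal (b : A) : ideal (fun e => le e b).
Proof. split; [apply bot_min| intros; eapply le_trans'; eauto | intros; apply join_lub; auto]. Qed.
Lemma filt_mclosed F : filt F -> mclosed F.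
Proof. intros [H1 H2 H3]; split; auto. Qed.

Lemma pin_top (p : PfT A) : proj1_sig p tp.
Proof. apply (pf_top A _ (proj2_sig p)). Qed.
Lemma pin_up (p : PfT A) a b : proj1_sig p a -> le a b -> proj1_sig p b.
Proof. apply (pf_up A _ (proj2_sig p)). Qed.
Lemma pin_meet (p : PfT A) a b : proj1_sig p (mt a b) <-> proj1_sig p a /\ proj1_sig p b.
Proof.
  split.
  - intro H; split; eapply pin_up; eauto; [apply meet_lb1|apply meet_lb2].
  - intros [H1 H2]; apply (pf_meet A _ (proj2_sig p)); auto.
Qed.
Lemma pin_join (p : PfT A) a b : proj1_sig p (jn a b) <-> proj1_sig p a \/ proj1_sig p b.
Proof.
  split.
  - apply (pf_prime A _ (proj2_sig p)).
  - intros [H|H]; eapply pin_up; eauto; [apply join_ub1|apply join_ub2].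
Qed.
Lemma pin_bot (p : PfT A) : ~ proj1_sig p bt.
Proof. apply (pf_proper A _ (proj2_sig p)). Qed.
Lemma pin_imp (p : PfT A) a b : proj1_sig p a -> proj1_sig p (im a b) -> proj1_sig p b.
Proof. intros H1 H2. eapply pin_up; [apply pin_meet; split; [exact H1|exact H2]|apply mp_le]. Qed.

Theorem PFT (F I : A -> Prop) : filt F -> ideal I -> (forall a, F a -> I a -> False) ->
  exists p : PfT A, (forall a, F a -> proj1_sig p a) /\ (forall a, proj1_sig p a -> ~ I a).
Proof.
  intros HF HI Hdis.
  set (Q := fun X : A -> Prop => filt X /\ sub F X /\ forall a, X a -> ~ I a).
  destruct (zorn Q F) as [M [[HMf [HFM HMI]] Hmax]].
  { intros C HC Hch. split; [split|split].
    - left; apply (fi_top F HF).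
    - intros a b [Ha|[X [HX Ha]]] Hab; [left; eapply (fi_up F HF); eauto|].
      right; exists X; split; auto. eapply (fi_up X (proj1 (HC X HX))); eauto.
    - intros a b [Ha|[X [HX Ha]]] [Hb|[Y [HY Hb]]].
      + left; apply (fi_meet F HF); auto.
      + right; exists Y; split; auto. apply (fi_meet Y (proj1 (HC Y HY))); auto. apply (HC Y HY); auto.
      + right; exists X; split; auto. apply (fi_meet X (proj1 (HC X HX))); auto. apply (HC X HX); auto.
      + destruct (Hch X Y HX HY) as [H|H].
        * right; exists Y; split; auto. apply (fi_meet Y (proj1 (HC Y HY))); auto.
        * right; exists X; split; auto. apply (fi_meet X (proj1 (HC X HX))); auto.
    - intros t Ht; left; auto.
    - intros a [Ha|[X [HX Ha]]].
      + intro; eapply Hdis; eauto.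
      + apply (HC X HX); auto. }
  assert (Hext : forall a, ~ M a -> exists m c, M m /\ I c /\ le (mt m a) c).
  { intros a Ha.
    set (Ma := gen2 M (fun e => le a e)).
    assert (HMa : filt Ma) by (apply gen2_filt; [apply filt_mclosed; auto|apply up_mclosed]).
    assert (HMMa : sub M Ma).
    { intros t Ht; exists t, tp; repeat split; auto; [apply top_max|apply meet_lb1]. }
    assert (~ Q Ma).
    { intro HQ. apply Ha. apply (Hmax Ma HQ HMMa). exists tp, a; repeat split.
      - apply (fi_top M HMf).
      - apply le_refl'.
      - apply meet_lb2. }
    apply NNPP; intro Hn. apply H. split; [|split]; auto.
    - intros t Ht; apply HMMa; apply HFM; auto.
    - intros c [e1 [e2 [H1 [H2 H3]]]] Hc. apply Hn. exists e1, c; repeat split; auto.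
      eapply le_trans'; [|exact H3]. apply meet_mono; [apply le_refl'|auto]. }
  assert (HP : prime_filter A M).
  { split.
    - apply (fi_top M HMf).
    - apply (fi_up M HMf).
    - apply (fi_meet M HMf).
    - intro Hb. apply (HMI _ Hb). apply (id_bot I HI).
    - intros a b Hab. apply NNPP; intro Hn.
      apply not_or_and in Hn; destruct Hn as [Ha Hb].
      destruct (Hext a Ha) as [m1 [c1 [Hm1 [Hc1 H1]]]].
      destruct (Hext b Hb) as [m2 [c2 [Hm2 [Hc2 H2]]]].
      apply (HMI (mt (mt m1 m2) (jn a b))).
      + apply (fi_meet M HMf); auto. apply (fi_meet M HMf); auto.
      + apply (id_down I HI) with (jn c1 c2); [apply (id_join I HI); auto|].
        eapply le_trans'; [apply distr_le|]. apply join_mono.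
        * eapply le_trans'; [|exact H1]. apply meet_mono; [apply meet_lb1|apply le_refl'].
        * eapply le_trans'; [|exact H2]. apply meet_mono; [apply meet_lb2|apply le_refl']. }
  exists (exist _ M HP); simpl; split; auto.
Qed.

Lemma PFT_sep (a b : A) : ~ le a b -> exists p : PfT A, proj1_sig p a /\ ~ proj1_sig p b.
Proof.
  intro Hab. destruct (PFT (fun e => le a e) (fun e => le e b) (up_filt a) (down_ideal b)) as [p [H1 H2]].
  - intros c H1 H2; apply Hab; eapply le_trans'; eauto.
  - exists p; split; [apply H1, le_refl'|]. intro Hb. exact (H2 b Hb (le_refl' b)).
Qed.

Lemma theta_inj (a b : A) : (forall p : PfT A, theta A a p <-> theta A b p) -> a = b.
Proof.
  intro H. apply le_antisym'; apply NNPP; intro Hn; destruct (PFT_sep _ _ Hn) as [p [H1 H2]];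
  apply H2; apply H; exact H1.
Qed.

Lemma Pf_inhabited : inhabited (PfT A).
Proof.
  destruct (PFT (fun e => le tp e) (fun e => le e bt) (up_filt tp) (down_ideal bt)) as [p _].
  - intros c H1 H2. apply (top_neq_bot A HA). apply le_antisym'; [eapply le_trans'; eauto|apply bot_min].
  - exact (inhabits p).
Qed.

Lemma pin_bigmeet (p : PfT A) (l : list A) :
  proj1_sig p (bigmeet l) <-> forall a, In a l -> proj1_sig p a.
Proof.
  induction l as [|a l IH]; simpl.
  - split; [intros _ _ []|intros; apply pin_top].
  - rewrite pin_meet, IH. split.
    + intros [H1 H2] b [<-|Hb]; auto.
    + intros H; split; auto.
Qed.

Lemma pin_bigjoin (p : PfT A) (l : list A) :
  proj1_sig p (bigjoin l) <-> exists a, In a l /\ proj1_sig p a.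
Proof.
  induction l as [|a l IH]; simpl.
  - split; [intro H; exfalso; exact (pin_bot p H)|intros [a [[] _]]].
  - rewrite pin_join, IH. split.
    + intros [H|[b [Hb H]]]; eauto.
    + intros [b [[<-|Hb] H]]; eauto.
Qed.

Lemma pf_basis (U : PfT A -> Prop) : gen_open (Pf_subbasis A) U ->
  forall p, U p -> exists a b, proj1_sig p a /\ ~ proj1_sig p b /\
    forall q : PfT A, proj1_sig q a -> ~ proj1_sig q b -> U q.
Proof.
  induction 1 as [U HS| |U V HU IHU HV IHV|F HF IH|U V HUV HU IH]; intros p Hp.
  - destruct HS as [c [H|H]].
    + exists c, bt; repeat split; [apply H; auto|apply pin_bot|]. intros q Hq _; apply H; auto.
    + exists tp, c; repeat split; [apply pin_top|apply H; auto|]. intros q _ Hq; apply H; auto.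
  - exists tp, bt; repeat split; [apply pin_top|apply pin_bot].
  - destruct Hp as [Hp1 Hp2].
    destruct (IHU p Hp1) as [a1 [b1 [H1 [H2 H3]]]].
    destruct (IHV p Hp2) as [a2 [b2 [G1 [G2 G3]]]].
    exists (mt a1 a2), (jn b1 b2); split; [|split].
    + apply pin_meet; auto.
    + rewrite pin_join; tauto.
    + intros q Hq1 Hq2. rewrite pin_meet in Hq1. rewrite pin_join in Hq2.
      split; [apply H3|apply G3]; tauto.
  - destruct Hp as [U [HU HUp]]. destruct (IH U HU p HUp) as [a [b [H1 [H2 H3]]]].
    exists a, b; repeat split; auto. intros q Hq1 Hq2; exists U; auto.
  - apply HUV in Hp. destruct (IH p Hp) as [a [b [H1 [H2 H3]]]].
    exists a, b; repeat split; auto. intros q Hq1 Hq2; apply HUV; auto.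
Qed.

Definition inpair (s : A * A) (p : PfT A) : Prop := proj1_sig p (fst s) /\ ~ proj1_sig p (snd s).

Lemma pair_compact (S : A * A -> Prop) :
  (forall p, exists s, S s /\ inpair s p) ->
  exists L, (forall s, In s L -> S s) /\ forall p, exists s, In s L /\ inpair s p.
Proof.
  intro Hcov. apply NNPP; intro Hno.
  assert (H : forall L, (forall s, In s L -> S s) -> exists p, forall s, In s L -> ~ inpair s p).
  { intros L HL. apply NNPP; intro Hn. apply Hno. exists L; split; auto.
    intro p. apply NNPP; intro Hp. apply Hn. exists p. intros s Hs Hsp. apply Hp; eauto. }
  set (agree := fun (t : bool * A) (p : PfT A) => proj1_sig p (snd t) <-> fst t = true).
  set (Good := fun X : bool * A -> Prop => forall L l, (forall s, In s L -> S s) ->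
     exists p : PfT A, (forall s, In s L -> ~ inpair s p) /\ (forall t, In t l -> X t -> agree t p)).
  destruct (zorn Good (fun _ => False)) as [M [HM Hmax]].
  { intros C HC Hch L l HL.
    assert (Hfin : forall l : list (bool * A), (exists X, C X /\ forall t, In t l -> supc (fun _ => False) C t -> X t)
               \/ (forall t, In t l -> ~ supc (fun _ => False) C t)).
    { induction l0 as [|t l0 IH].
      - right; intros t [].
      - destruct (classic (supc (fun _ => False) C t)) as [Ht|Ht].
        + destruct Ht as [[]|[X1 [HX1 Ht1]]]. left.
          destruct IH as [[X2 [HX2 H2]]|H2].
          * destruct (Hch X1 X2 HX1 HX2) as [Hs|Hs].
            -- exists X2; split; auto. intros t' [<-|Ht'] Hs'; auto.
            -- exists X1; split; auto. intros t' [<-|Ht'] Hs'; auto.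
          * exists X1; split; auto. intros t' [<-|Ht'] Hs'; auto. exfalso; eapply H2; eauto.
        + destruct IH as [[X2 [HX2 H2]]|H2].
          * left; exists X2; split; auto. intros t' [<-|Ht'] Hs'; [contradiction|auto].
          * right; intros t' [<-|Ht']; auto. }
    destruct (Hfin l) as [[X [HX HXl]]|Hn].
    - destruct (HC X HX L l HL) as [p [Hp1 Hp2]]. exists p; split; auto.
    - destruct (H L HL) as [p Hp]. exists p; split; auto. intros t Ht Ht'; exfalso; eapply Hn; eauto. }
  assert (Hcons : forall l, (forall t, In t l -> M t) -> exists p, forall t, In t l -> agree t p).
  { intros l Hl. destruct (HM nil l) as [p [_ Hp]]; [intros _ []|]. exists p; auto. }
  assert (Hnb : forall c, ~ (M (true, c) /\ M (false, c))).
  { intros c [H1 H2]. destruct (Hcons ((true,c)::(false,c)::nil)) as [p Hp].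
    - intros t [<-|[<-|[]]]; auto.
    - assert (E1 := Hp _ (or_introl eq_refl)). assert (E2 := Hp _ (or_intror (or_introl eq_refl))).
      unfold agree in *; simpl in *. destruct E2 as [E2 _]. assert (false = true) by (apply E2, E1; reflexivity). discriminate. }
  assert (Htot : forall c, M (true, c) \/ M (false, c)).
  { intro c. apply NNPP; intro Hn. apply not_or_and in Hn; destruct Hn as [Hn1 Hn2].
    set (Y1 := fun t => M t \/ t = (true, c)). set (Y2 := fun t => M t \/ t = (false, c)).
    assert (N1 : ~ Good Y1).
    { intro G. apply Hn1. apply (Hmax Y1 G); [intros t Ht; left; auto|right; reflexivity]. }
    assert (N2 : ~ Good Y2).
    { intro G. apply Hn2. apply (Hmax Y2 G); [intros t Ht; left; auto|right; reflexivity]. }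
    assert (E : forall Y, ~ Good Y -> exists L l, (forall s, In s L -> S s) /\
      forall p, (forall s, In s L -> ~ inpair s p) -> (forall t, In t l -> Y t -> agree t p) -> False).
    { intros Y HY. apply NNPP; intro Hn. apply HY. intros L l HL. apply NNPP; intro Hn'.
      apply Hn. exists L, l; split; auto. intros p H1 H2. apply Hn'; exists p; auto. }
    destruct (E Y1 N1) as [L1 [l1 [HL1 F1]]]. destruct (E Y2 N2) as [L2 [l2 [HL2 F2]]].
    destruct (HM (L1 ++ L2) (l1 ++ l2)) as [p [Hp1 Hp2]].
    { intros s Hs; apply in_app_or in Hs; destruct Hs; auto. }
    destruct (classic (proj1_sig p c)) as [Hc|Hc].
    - apply (F1 p).
      + intros s Hs; apply Hp1; apply in_or_app; auto.
      + intros t Ht [Hm| ->]; [apply Hp2; auto; apply in_or_app; auto|].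
        unfold agree; simpl; split; auto.
    - apply (F2 p).
      + intros s Hs; apply Hp1; apply in_or_app; auto.
      + intros t Ht [Hm| ->]; [apply Hp2; auto; apply in_or_app; auto|].
        unfold agree; simpl; split; [intro; contradiction|discriminate]. }
  assert (Hf : forall c, M (false, c) <-> ~ M (true, c)).
  { intro c; split; [intros H1 H2; apply (Hnb c); auto|intro; destruct (Htot c); tauto]. }
  set (P := fun c => M (true, c)).
  assert (HP : prime_filter A P).
  { split.
    - apply NNPP; intro Hn. apply Hf in Hn. destruct (Hcons ((false, tp) :: nil)) as [p Hp].
      + intros t [<-|[]]; auto.
      + assert (E := Hp _ (or_introl eq_refl)). unfold agree in E; simpl in E.
        assert (false = true) by (apply E, pin_top). discriminate.
    - intros a b Ha Hab. apply NNPP; intro Hn. apply Hf in Hn.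
      destruct (Hcons ((true, a) :: (false, b) :: nil)) as [p Hp].
      + intros t [<-|[<-|[]]]; auto.
      + assert (E1 := Hp _ (or_introl eq_refl)). assert (E2 := Hp _ (or_intror (or_introl eq_refl))).
        unfold agree in *; simpl in *.
        assert (false = true) by (apply E2; eapply pin_up; [apply E1; reflexivity|exact Hab]). discriminate.
    - intros a b Ha Hb. apply NNPP; intro Hn. apply Hf in Hn.
      destruct (Hcons ((true, a) :: (true, b) :: (false, mt a b) :: nil)) as [p Hp].
      + intros t [<-|[<-|[<-|[]]]]; auto.
      + assert (E1 := Hp _ (or_introl eq_refl)). assert (E2 := Hp _ (or_intror (or_introl eq_refl))).
        assert (E3 := Hp _ (or_intror (or_intror (or_introl eq_refl)))).
        unfold agree in *; simpl in *.
        assert (false = true); [|discriminate]. apply E3, pin_meet; split; [apply E1|apply E2]; reflexivity.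
    - intro Hb. destruct (Hcons ((true, bt) :: nil)) as [p Hp].
      + intros t [<-|[]]; auto.
      + assert (E := Hp _ (or_introl eq_refl)). unfold agree in E; simpl in E.
        apply (pin_bot p). apply E; reflexivity.
    - intros a b Hab. apply NNPP; intro Hn. apply not_or_and in Hn. destruct Hn as [Ha Hb].
      apply Hf in Ha; apply Hf in Hb.
      destruct (Hcons ((true, jn a b) :: (false, a) :: (false, b) :: nil)) as [p Hp].
      + intros t [<-|[<-|[<-|[]]]]; auto.
      + assert (E1 := Hp _ (or_introl eq_refl)). assert (E2 := Hp _ (or_intror (or_introl eq_refl))).
        assert (E3 := Hp _ (or_intror (or_intror (or_introl eq_refl)))).
        unfold agree in *; simpl in *.
        destruct (proj1 (pin_join p a b) (proj2 E1 eq_refl)) as [H'|H'];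
          [assert (false = true) by (apply E2; exact H')|assert (false = true) by (apply E3; exact H')]; discriminate. }
  destruct (Hcov (exist _ P HP)) as [s [Hs [Hs1 Hs2]]]. simpl in Hs1, Hs2.
  apply Hf in Hs2.
  destruct (HM (s :: nil) ((true, fst s) :: (false, snd s) :: nil)) as [p [Hp1 Hp2]].
  - intros s' [<-|[]]; auto.
  - apply (Hp1 s (or_introl eq_refl)).
    assert (E1 := Hp2 _ (or_introl eq_refl) Hs1). assert (E2 := Hp2 _ (or_intror (or_introl eq_refl)) Hs2).
    unfold agree in *; simpl in *. split; [apply E1; reflexivity|intro H'; apply E2 in H'; discriminate].
Qed.

Lemma Pf_compact : compact (Pf A).
Proof.
  intros F HF Hcov.
  destruct (pair_compact (fun s => exists U, F U /\ forall q, inpair s q -> U q)) as [L [HL1 HL2]].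
  - intro p. destruct (Hcov p) as [U [HU Hp]].
    destruct (pf_basis U (HF U HU) p Hp) as [a [b [H1 [H2 H3]]]].
    exists (a, b); split; [exists U; split; auto|split; auto].
    intros q [Hq1 Hq2]; apply H3; auto.
  - assert (Hc : forall L : list (A * A), (forall s, In s L -> exists U, F U /\ forall q, inpair s q -> U q) ->
       exists LU : list (PfT A -> Prop), (forall U, In U LU -> F U) /\
         forall q, (exists s, In s L /\ inpair s q) -> exists U, In U LU /\ U q).
    { induction L0 as [|s L0 IH]; intro H.
      - exists nil; split; [intros _ []|intros q [s [[] _]]].
      - destruct IH as [LU [H1 H2]]; [intros; apply H; right; auto|].
        destruct (H s (or_introl eq_refl)) as [U [HU HU']].
        exists (U :: LU); split; [intros V [<-|HV]; auto|].
        intros q [s' [[<-|Hs'] Hq]]; [exists U; split; [left|]; auto|].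
        destruct (H2 q) as [V [HV HVq]]; [eauto|]. exists V; split; [right|]; auto. }
    destruct (Hc L HL1) as [LU [H1 H2]]. exists LU; split; auto.
Qed.

Lemma pf_clopen_rep (U : PfT A -> Prop) : @clopen (Pf A) U ->
  exists L : list (A * A), forall p, U p <-> exists s, In s L /\ inpair s p.
Proof.
  intros [HU HnU].
  destruct (compact_idx (Pf A) Pf_compact U HnU (fun s => forall q, inpair s q -> U q) inpair) as [L [HL1 HL2]].
  - intros s _. simpl. apply (go_ext _ (fun p => theta A (fst s) p /\ ~ theta A (snd s) p)); [unfold inpair, theta; tauto|].
    apply go_inter; apply go_sub; [exists (fst s); left|exists (snd s); right]; intro; unfold theta; tauto.
  - intros p Hp. destruct (pf_basis U HU p Hp) as [a [b [H1 [H2 H3]]]].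
    exists (a, b); split; [intros q [Hq1 Hq2]; apply H3; auto|split; auto].
  - exists L; intro p; split; [apply HL2|]. intros [s [Hs Hsp]]. apply (HL1 s Hs); auto.
Qed.

Definition pfle (p q : PfT A) : Prop := forall a, proj1_sig p a -> proj1_sig q a.

Lemma pf_down (c d : A) (p : PfT A) :
  (exists q, pfle p q /\ proj1_sig q c /\ ~ proj1_sig q d) <-> ~ proj1_sig p (im c d).
Proof.
  split.
  - intros [q [Hpq [Hc Hd]]] Hp. apply Hd. apply (pin_imp q c d); auto.
  - intro Hn.
    destruct (PFT (gen2 (proj1_sig p) (fun e => le c e)) (fun e => le e d)) as [q [H1 H2]].
    + apply gen2_filt; [split; [apply pin_top|intros; apply pin_meet; auto]|apply up_mclosed; auto].
    + apply down_ideal; auto.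
    + intros a [e1 [e2 [G1 [G2 G3]]]] Ha. apply Hn.
      apply (pin_up p e1); auto. apply (imp_residual A HA).
      eapply le_trans'; eauto. eapply le_trans'; [|exact G3]. apply meet_mono; auto; apply le_refl'; auto.
    + exists q; repeat split.
      * intros a Ha. apply H1. exists a, tp; repeat split; auto; [apply top_max|apply meet_lb1]; auto.
      * apply H1. exists tp, c; repeat split; [apply pin_top|apply le_refl'|apply meet_lb2]; auto.
      * intro Hd. apply (H2 d Hd). apply le_refl'; auto.
Qed.

Lemma pf_clopen_up (U : PfT A -> Prop) : @clopen_up (Pf A) U ->
  exists a : A, forall p, U p <-> theta A a p.
Proof.
  intros [[HU HnU] Hup].
  destruct (pf_clopen_rep (fun p => ~ U p)) as [L HL].
  { split; auto. simpl. apply (go_ext _ U); [intro; split; [auto|apply NNPP]|exact HU]. }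
  exists (bigmeet (map (fun s => im (fst s) (snd s)) L)). intro p. unfold theta.
  rewrite pin_bigmeet. split.
  - intros Hp a Ha. apply in_map_iff in Ha. destruct Ha as [s [<- Hs]].
    apply NNPP; intro Hn. apply pf_down in Hn. destruct Hn as [q [Hpq [Hc Hd]]].
    assert (Hq : U q) by (apply (Hup p q); auto).
    apply HL in Hq; auto. exists s; split; auto; split; auto.
  - intro H. apply NNPP; intro Hn. apply HL in Hn. destruct Hn as [s [Hs [Hs1 Hs2]]].
    apply Hs2. apply (pin_imp p (fst s)); auto. apply H. apply in_map_iff. exists s; auto.
Qed.

Lemma pf_down_clopen (U : PfT A -> Prop) : @clopen (Pf A) U -> @clopen (Pf A) (@downset (Pf A) U).
Proof.
  intro HU. destruct (pf_clopen_rep U HU) as [L HL].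
  set (m := bigmeet (map (fun s => im (fst s) (snd s)) L)).
  assert (E : forall p, @downset (Pf A) U p <-> ~ proj1_sig p m).
  { intro p; unfold m; rewrite pin_bigmeet. split.
    - intros [q [Hpq Hq]] H. apply HL in Hq. destruct Hq as [s [Hs [Hs1 Hs2]]].
      apply Hs2. apply (pin_imp q (fst s)); auto. apply Hpq, H, in_map_iff; exists s; auto.
    - intro H. apply not_all_ex_not in H. destruct H as [a H]. apply imply_to_and in H. destruct H as [Ha H].
      apply in_map_iff in Ha. destruct Ha as [s [<- Hs]].
      apply pf_down in H. destruct H as [q [Hpq [Hc Hd]]].
      exists q; split; [exact Hpq|]. apply HL. exists s; split; auto; split; auto. }
  split; simpl.
  - apply (go_ext _ (fun p => ~ theta A m p)); [intro p; rewrite E; unfold theta; tauto|].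
    apply go_sub; exists m; right; tauto.
  - apply (go_ext _ (fun p => theta A m p)); [intro p; rewrite E; unfold theta; split; [tauto|apply NNPP]|].
    apply go_sub; exists m; left; tauto.
Qed.


Lemma theta_clopen_up (a : A) : @clopen_up (Pf A) (theta A a).
Proof.
  split; [split|].
  - apply go_sub; exists a; left; tauto.
  - apply go_sub; exists a; right; tauto.
  - intros x y Hxy Hx; apply Hxy; exact Hx.
Qed.

Lemma cond_filt (a : A) (x : PfT A) : filt (fun b => proj1_sig x (cd a b)).
Proof.
  split.
  - rewrite (cond_top A HA). apply pin_top.
  - intros b c Hb Hbc. eapply pin_up; [exact Hb|]. apply cond_mono; auto.
  - intros b c Hb Hc. rewrite (cond_meet A HA). apply pin_meet; auto.
Qed.

Lemma Pf_R_char (U : PfT A -> Prop) (a : A) (x y : PfT A) : (forall p, U p <-> theta A a p) ->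
  (Pf_R A U x y <-> forall b, proj1_sig x (cd a b) -> proj1_sig y b).
Proof.
  intro HU; split.
  - intros [a' [Ha' H]]. assert (E : a = a').
    { apply theta_inj. intro p; rewrite <- HU; apply Ha'. }
    subst a'; exact H.
  - intro H; exists a; split; auto.
Qed.

Lemma pf_cbox (a b : A) (x : PfT A) :
  (forall y, Pf_R A (theta A a) x y -> proj1_sig y b) <-> proj1_sig x (cd a b).
Proof.
  split.
  - intro H. apply NNPP; intro Hn.
    destruct (PFT (fun c => proj1_sig x (cd a c)) (fun e => le e b) (cond_filt a x) (down_ideal b))
      as [y [H1 H2]].
    + intros c Hc Hcb. apply Hn. eapply pin_up; [exact Hc|]. apply cond_mono; auto.
    + apply (H2 b); [apply H; apply (proj2 (Pf_R_char (theta A a) a x y (fun p => iff_refl _))); exact H1|apply le_refl'].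
  - intros Hx y Hy. exact (proj1 (Pf_R_char (theta A a) a x y (fun p => iff_refl _)) Hy b Hx).
Qed.

Lemma Pf_is_CES : is_CES (Pf A).
Proof.
  split.
  - exact Pf_inhabited.
  - intros x a H; exact H.
  - intros x y z H1 H2 a H; auto.
  - intros x y H1 H2. apply sig_ext. apply pred_ext; intro a; split; auto.
  - exact Pf_compact.
  - intros x y Hxy. simpl in Hxy. apply not_all_ex_not in Hxy. destruct Hxy as [a Ha].
    apply imply_to_and in Ha. exists (theta A a); split; [apply theta_clopen_up|]. exact Ha.
  - apply pf_down_clopen.
  - intros U V HU HV. destruct (pf_clopen_up U HU) as [a Ha]. destruct (pf_clopen_up V HV) as [b Hb].
    apply pred_ext in Ha. apply pred_ext in Hb. subst U V.
    split; simpl.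
    + apply (go_ext _ (theta A (cd a b))); [|apply go_sub; exists (cd a b); left; tauto].
      intro x. pose proof (pf_cbox a b x) as E. unfold cboxset, theta in *. simpl in *. tauto.
    + apply (go_ext _ (fun x => ~ theta A (cd a b) x)); [|apply go_sub; exists (cd a b); right; tauto].
      intro x. pose proof (pf_cbox a b x) as E. unfold cboxset, theta in *. simpl in *. tauto.
  - intros U HU x y. destruct (pf_clopen_up U HU) as [a Ha]. simpl.
    rewrite (Pf_R_char U a x y Ha). split.
    + intros [x' [y' [H1 [H2 H3]]]]. pose proof (proj1 (Pf_R_char U a x' y' Ha) H2) as H4. intros b Hb. auto.
    + intro H. exists x, y; split; [intros c Hc; exact Hc|split; [|intros c Hc; exact Hc]].
      apply (proj2 (Pf_R_char U a x y Ha)); auto.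
  - intros U HU x. destruct (pf_clopen_up U HU) as [a Ha]. simpl.
    apply (go_ext _ (fun y => exists V, (fun V => exists b, proj1_sig x (cd a b) /\ V = (fun p => ~ theta A b p)) V /\ V y)).
    + intro y. rewrite (Pf_R_char U a x y Ha). split.
      * intros [V [[b [Hb ->]] Hy]] H. apply Hy, H, Hb.
      * intro H. apply not_all_ex_not in H. destruct H as [b H]. apply imply_to_and in H.
        exists (fun p => ~ theta A b p); split; [exists b; split; [tauto|reflexivity]|tauto].
    + apply go_union. intros V [b [_ ->]]. apply go_sub; exists b; right; tauto.
Qed.

End Alg.

Lemma in_trues {T : Type} (l : list (bool * T)) (c : T) :
  In c (map snd (filter fst l)) <-> In (true, c) l.
Proof.
  rewrite in_map_iff. split.
  - intros [[b c'] [E H]]. simpl in E; subst c'. apply filter_In in H. destruct H as [H Hb]. simpl in Hb; subst b; auto.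
  - intro H. exists (true, c); split; auto. apply filter_In; auto.
Qed.
Lemma in_falses {T : Type} (l : list (bool * T)) (c : T) :
  In c (map snd (filter (fun i => negb (fst i)) l)) <-> In (false, c) l.
Proof.
  rewrite in_map_iff. split.
  - intros [[b c'] [E H]]. simpl in E; subst c'. apply filter_In in H. destruct H as [H Hb].
    destruct b; simpl in Hb; [discriminate|auto].
  - intro H. exists (false, c); split; auto. apply filter_In; auto.
Qed.

Section Spc.
Context (X : CESdata) (HX : is_CES X).
Local Notation C := (ClpUp X HX).

Lemma clp_le (a b : ClpT X) : @cha_le C a b <-> forall x, proj1_sig a x -> proj1_sig b x.
Proof.
  split.
  - intros H x Hx. assert (E := f_equal (fun c : ClpT X => proj1_sig c x) H). simpl in E.
    rewrite <- E in Hx. tauto.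
  - intro H. apply sig_ext, pred_ext; intro x; simpl. split; [tauto|]. intro; split; auto.
Qed.

Lemma ClpUp_is_CHA : is_CHA C.
Proof.
  split; try (intros; apply sig_ext, pred_ext; intro; simpl; tauto).
  - intros a b c. rewrite !clp_le. simpl. unfold imp_set, downset. split.
    + intros H x Hx [y [Hxy [Hb Hc]]]. apply Hc, H. split; auto.
      apply (proj2 (proj2_sig a) x y Hxy Hx).
    + intros H x [Ha Hb]. apply NNPP; intro Hc. apply (H x Ha). exists x; split; auto.
      apply (le_refl X HX).
  - intro E. destruct (ces_nonempty X HX) as [x].
    assert (E' := f_equal (fun c : ClpT X => proj1_sig c x) E). simpl in E'.
    rewrite <- E'; exact I.
  - intros; apply sig_ext, pred_ext; intro; simpl; unfold cboxset; firstorder.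
  - intros; apply sig_ext, pred_ext; intro; simpl; unfold cboxset; firstorder.
Qed.

Lemma clp_bigmeet (l : list (ClpT X)) (x : X) :
  proj1_sig (@bigmeet C l) x <-> forall a, In a l -> proj1_sig a x.
Proof.
  induction l as [|a l IH]; simpl.
  - split; [intros _ _ []|auto].
  - change (proj1_sig a x /\ proj1_sig (@bigmeet C l) x <-> forall b, a = b \/ In b l -> proj1_sig b x).
    rewrite IH. split; [intros [H1 H2] b [<-|Hb]; auto|intro H; split; auto].
Qed.

Lemma clp_bigjoin (l : list (ClpT X)) (x : X) :
  proj1_sig (@bigjoin C l) x <-> exists a, In a l /\ proj1_sig a x.
Proof.
  induction l as [|a l IH]; simpl.
  - split; [intros []|intros [a [[] _]]].
  - change (proj1_sig a x \/ proj1_sig (@bigjoin C l) x <-> exists b, (a = b \/ In b l) /\ proj1_sig b x).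
    rewrite IH. split; [intros [H|[b [Hb H]]]; eauto|intros [b [[<-|Hb] H]]; eauto].
Qed.

Lemma clp_sep (x y : X) : ~ ces_le x y -> exists a : ClpT X, proj1_sig a x /\ ~ proj1_sig a y.
Proof.
  intro H. destruct (ces_separation X HX x y H) as [a [Ha [H1 H2]]].
  exists (exist _ a Ha); simpl; auto.
Qed.

Lemma lemK (a : X -> Prop) (Ha : clopen_up a) (x y : X) : ~ ces_R a x y ->
  exists c : ClpT X, (forall z, ces_R a x z -> proj1_sig c z) /\ ~ proj1_sig c y.
Proof.
  intro Hn.
  destruct (compact_idx X (ces_compact X HX) (fun z => ces_R a x z) (ces_R_closed X HX a Ha x)
     (fun c : ClpT X => ~ proj1_sig c y) (fun c => proj1_sig c)) as [l [Hl1 Hl2]].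
  - intros c _. apply (proj2_sig c).
  - intros z Hz. destruct (clp_sep z y) as [c [H1 H2]]; [|exists c; auto]. intro Hzy. apply Hn.
    apply (ces_R_le X HX a Ha). exists x, z; split; [apply (le_refl X HX)|split; auto].
  - exists (@bigjoin C l). split.
    + intros z Hz. apply clp_bigjoin. apply Hl2; auto.
    + intro H. apply clp_bigjoin in H. destruct H as [c [Hc H]]. apply (Hl1 c Hc); auto.
Qed.

Lemma clp_nbhd (U : X -> Prop) (x : X) : ces_open U -> U x ->
  exists a b : ClpT X, proj1_sig a x /\ ~ proj1_sig b x /\ forall z, proj1_sig a z -> ~ proj1_sig b z -> U z.
Proof.
  intros HU Hx.
  destruct (compact_idx X (ces_compact X HX) (fun z => ~ U z)
    (ces_open_ext X U _ (fun z => conj (fun H H' => H' H) (@NNPP (U z))) HU)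
    (fun i : bool * ClpT X => if fst i then proj1_sig (snd i) x else ~ proj1_sig (snd i) x)
    (fun i => if fst i then (fun z => ~ proj1_sig (snd i) z) else proj1_sig (snd i))) as [l [Hl1 Hl2]].
  - intros [[|] c] _; simpl; apply (proj2_sig c).
  - intros z Hz. destruct (classic (ces_le x z)) as [Hxz|Hxz].
    + assert (Hzx : ~ ces_le z x).
      { intro Hzx. apply Hz. rewrite (le_antisym X HX z x Hzx Hxz). exact Hx. }
      destruct (clp_sep z x Hzx) as [d [H1 H2]]. exists (false, d); simpl; auto.
    + destruct (clp_sep x z Hxz) as [c [H1 H2]]. exists (true, c); simpl; auto.
  - exists (@bigmeet C (map snd (filter fst l))), (@bigjoin C (map snd (filter (fun i => negb (fst i)) l))).
    split; [|split].
    + apply clp_bigmeet. intros c Hc. apply in_trues in Hc. exact (Hl1 _ Hc).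
    + intro H. apply clp_bigjoin in H. destruct H as [c [Hc H]]. apply in_falses in Hc. exact (Hl1 _ Hc H).
    + intros z Ha Hb. apply NNPP; intro Hz. destruct (Hl2 z Hz) as [[[|] c] [Hi Hg]]; simpl in Hg.
      * apply Hg. apply clp_bigmeet with (l := map snd (filter fst l)); auto. apply in_trues; auto.
      * apply Hb. apply clp_bigjoin. exists c; split; auto. apply in_falses; auto.
Qed.

Lemma clp_surj (P : PfT C) : exists x : X, forall a, proj1_sig P a <-> proj1_sig a x.
Proof.
  apply NNPP; intro Hno.
  assert (Hn : forall x, exists a, ~ (proj1_sig P a <-> proj1_sig a x)).
  { intro x. apply NNPP; intro H. apply Hno. exists x. intro a. apply NNPP; intro H'. apply H; eauto. }
  destruct (compact_idx X (ces_compact X HX) (fun _ => True)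
    (ces_open_ext X (fun _ => False) _ (fun z => conj (fun H => False_ind _ H) (fun H => H I)) (open_empty X))
    (fun i : bool * ClpT X => if fst i then proj1_sig P (snd i) else ~ proj1_sig P (snd i))
    (fun i => if fst i then (fun z => ~ proj1_sig (snd i) z) else proj1_sig (snd i))) as [l [Hl1 Hl2]].
  - intros [[|] c] _; simpl; apply (proj2_sig c).
  - intros x _. destruct (Hn x) as [a Ha]. destruct (classic (proj1_sig P a)) as [Hp|Hp].
    + exists (true, a); simpl; split; auto. tauto.
    + exists (false, a); simpl; split; auto. apply NNPP; tauto.
  - set (m := @bigmeet C (map snd (filter fst l))).
    set (j := @bigjoin C (map snd (filter (fun i => negb (fst i)) l))).
    assert (Hm : proj1_sig P m).
    { apply (pin_bigmeet C ClpUp_is_CHA). intros c Hc. apply in_trues in Hc. exact (Hl1 _ Hc). }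
    assert (Hj : ~ proj1_sig P j).
    { intro H. apply (pin_bigjoin C ClpUp_is_CHA) in H. destruct H as [c [Hc H]].
      apply in_falses in Hc. exact (Hl1 _ Hc H). }
    apply Hj. apply (pin_up C P m j Hm). apply clp_le. intros x Hx.
    destruct (Hl2 x I) as [[[|] c] [Hi Hg]]; simpl in Hg.
    + exfalso; apply Hg. apply clp_bigmeet with (l := map snd (filter fst l)); auto. apply in_trues; auto.
    + apply clp_bigjoin. exists c; split; auto. apply in_falses; auto.
Qed.

Lemma eps_pf (x : X) : prime_filter C (fun a : ClpT X => proj1_sig a x).
Proof.
  split.
  - exact I.
  - intros a b Ha Hab. exact (proj1 (clp_le a b) Hab x Ha).
  - intros a b Ha Hb; split; auto.
  - intro H; exact H.
  - intros a b H; exact H.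
Qed.

Definition eps (x : X) : PfT C := exist _ (fun a : ClpT X => proj1_sig a x) (eps_pf x).

Lemma eps_le (x y : X) : ces_le x y <-> (forall a : ClpT X, proj1_sig a x -> proj1_sig a y).
Proof.
  split.
  - intros H a Ha. exact (proj2 (proj2_sig a) x y H Ha).
  - intro H. apply NNPP; intro Hn. destruct (clp_sep x y Hn) as [a [H1 H2]]. auto.
Qed.

Lemma eps_inj (x y : X) : eps x = eps y -> x = y.
Proof.
  intro E. assert (E' : forall a : ClpT X, proj1_sig a x <-> proj1_sig a y).
  { intro a. assert (E2 := f_equal (fun p : PfT C => proj1_sig p a) E). simpl in E2. rewrite E2; tauto. }
  apply (le_antisym X HX); apply eps_le; intros a; apply E'.
Qed.

Definition epsinv (p : PfT C) : X := proj1_sig (constructive_indefinite_description _ (clp_surj p)).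
Lemma epsinv_spec (p : PfT C) (a : ClpT X) : proj1_sig p a <-> proj1_sig a (epsinv p).
Proof. unfold epsinv. destruct (constructive_indefinite_description _ (clp_surj p)) as [x Hx]; simpl; auto. Qed.
Lemma eps_epsinv (p : PfT C) : eps (epsinv p) = p.
Proof. apply sig_ext, pred_ext; intro a; simpl. symmetry; apply epsinv_spec. Qed.
Lemma epsinv_eps (x : X) : epsinv (eps x) = x.
Proof. apply eps_inj. apply eps_epsinv. Qed.

Lemma eps_mor : is_CES_mor X (Pf C) eps.
Proof.
  split.
  - intros U HU. simpl in HU. induction HU as [U HS| |U V HU IHU HV IHV|F HF IH|U V HUV HU IH].
    + destruct HS as [a [H|H]].
      * apply (ces_open_ext X (proj1_sig a)); [intro x; rewrite (H (eps x)); unfold theta; simpl; tauto|].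
        apply (proj2_sig a).
      * apply (ces_open_ext X (fun x => ~ proj1_sig a x)); [intro x; rewrite (H (eps x)); unfold theta; simpl; tauto|].
        apply (proj2_sig a).
    + apply ces_open_full.
    + apply ces_open_inter; auto.
    + apply (ces_open_ext X (fun x => exists V, (fun V => exists U, F U /\ V = fun x => U (eps x)) V /\ V x)).
      * intro x; split.
        -- intros [V [[U [HU ->]] Hx]]. exists U; auto.
        -- intros [U [HU Hx]]. exists (fun x => U (eps x)); split; auto. exists U; auto.
      * apply ces_open_union. intros V [U [HU ->]]. apply IH; auto.
    + apply (ces_open_ext X (fun x => U (eps x))); [intro; apply HUV|exact IH].
  - intros x y H. simpl. apply (proj1 (eps_le x y) H).
  - intros x z' H. exists (epsinv z'); split.
    + apply eps_le. intros a Ha. apply epsinv_spec. apply H. exact Ha.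
    + apply eps_epsinv.
  - intros a' Ha' x y H. destruct (pf_clopen_up C ClpUp_is_CHA a' Ha') as [a0 Ha0].
    assert (E : (fun u => a' (eps u)) = proj1_sig a0) by (apply pred_ext; intro u; apply (Ha0 (eps u))).
    rewrite E in H.
    apply (proj2 (Pf_R_char C ClpUp_is_CHA a' a0 _ _ Ha0)). intros b Hb. simpl in Hb. apply Hb; auto.
  - intros a' Ha' x z' H. destruct (pf_clopen_up C ClpUp_is_CHA a' Ha') as [a0 Ha0].
    assert (E : (fun u => a' (eps u)) = proj1_sig a0) by (apply pred_ext; intro u; apply (Ha0 (eps u))).
    rewrite E. pose proof (proj1 (Pf_R_char C ClpUp_is_CHA a' a0 _ _ Ha0) H) as H'.
    exists (epsinv z'). split.
    + apply NNPP; intro Hn. destruct (lemK (proj1_sig a0) (proj2_sig a0) x (epsinv z') Hn) as [c [Hc1 Hc2]].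
      apply Hc2. apply epsinv_spec. apply H'. simpl. intros y Hy; auto.
    + rewrite eps_epsinv. intros a Ha; exact Ha.
Qed.

Lemma epsinv_mor : is_CES_mor (Pf C) X epsinv.
Proof.
  split.
  - intros U HU. simpl.
    apply (go_ext _ (fun p => exists V, (fun V => exists a b : ClpT X,
        V = (fun p : PfT C => proj1_sig p a /\ ~ proj1_sig p b) /\
        forall z, proj1_sig a z -> ~ proj1_sig b z -> U z) V /\ V p)).
    + intro p; split.
      * intros [V [[a [b [-> Hab]]] [Hp1 Hp2]]]. apply Hab; [apply epsinv_spec; auto|].
        intro H; apply Hp2; apply epsinv_spec; auto.
      * intro Hp. destruct (clp_nbhd U (epsinv p) HU Hp) as [a [b [H1 [H2 H3]]]].
        exists (fun p : PfT C => proj1_sig p a /\ ~ proj1_sig p b); split.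
        -- exists a, b; split; auto.
        -- split; [apply epsinv_spec; auto|intro H; apply H2; apply epsinv_spec; auto].
    + apply go_union. intros V [a [b [-> _]]].
      apply (go_ext _ (fun p => theta C a p /\ ~ theta C b p)); [unfold theta; tauto|].
      apply go_inter; apply go_sub; [exists a; left|exists b; right]; tauto.
  - intros p q H. apply eps_le. intros a Ha. apply epsinv_spec. apply H. apply epsinv_spec; auto.
  - intros p z H. exists (eps z); split.
    + intros a Ha. simpl. apply (proj2 (proj2_sig a) (epsinv p) z H). apply epsinv_spec; auto.
    + apply epsinv_eps.
  - intros a' Ha' p q H.
    set (a0 := exist (fun a => clopen_up a) a' Ha' : ClpT X).
    assert (Ha0 : forall u : PfT C, a' (epsinv u) <-> theta C a0 u).
    { intro u. unfold theta. rewrite epsinv_spec. simpl. tauto. }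
    pose proof (proj1 (Pf_R_char C ClpUp_is_CHA _ a0 _ _ Ha0) H) as H'.
    apply NNPP; intro Hn. destruct (lemK a' Ha' (epsinv p) (epsinv q) Hn) as [c [Hc1 Hc2]].
    apply Hc2. apply epsinv_spec. apply H'. apply epsinv_spec. simpl. intros y Hy; auto.
  - intros a' Ha' p z H.
    set (a0 := exist (fun a => clopen_up a) a' Ha' : ClpT X).
    assert (Ha0 : forall u : PfT C, a' (epsinv u) <-> theta C a0 u).
    { intro u. unfold theta. rewrite epsinv_spec. simpl. tauto. }
    exists (eps z). split.
    + apply (proj2 (Pf_R_char C ClpUp_is_CHA _ a0 _ _ Ha0)). intros b Hb.
      apply epsinv_spec in Hb. simpl in Hb. simpl. apply Hb; auto.
    + rewrite epsinv_eps. apply (le_refl X HX).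
Qed.

End Spc.

Lemma pf_mor_CES (A B : CHAdata) (h : A -> B) (Hh : is_CHA_hom A B h) (HA : is_CHA A) (HB : is_CHA B) :
  is_CES_mor (Pf B) (Pf A) (pf_mor A B h Hh).
Proof.
  assert (Hid : forall z' : PfT A, ideal B (fun c => exists d, ~ proj1_sig z' d /\ cha_le c (h d))).
  { intro z'. split.
    - exists cha_bot; split; [apply pin_bot|]. rewrite (hom_bot A B h Hh). apply le_refl'; auto.
    - intros a b [d [Hd Hbd]] Hab. exists d; split; auto. eapply le_trans'; eauto.
    - intros a b [d1 [Hd1 H1]] [d2 [Hd2 H2]]. exists (cha_join d1 d2); split.
      + rewrite (pin_join A HA); tauto.
      + rewrite (hom_join A B h Hh). apply join_mono; auto. }
  split.
  - intros U HU. simpl in HU |- *. induction HU as [U HS| |U V HU IHU HV IHV|F HF IH|U V HUV HU IH].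
    + destruct HS as [a [H|H]]; apply go_sub; exists (h a); [left|right]; intro p;
        rewrite (H (pf_mor A B h Hh p)); unfold theta; simpl; tauto.
    + apply go_full.
    + apply go_inter; auto.
    + apply (go_ext _ (fun x => exists V, (fun V => exists U, F U /\ V = fun x => U (pf_mor A B h Hh x)) V /\ V x)).
      * intro x; split.
        -- intros [V [[U [HU ->]] Hx]]. exists U; auto.
        -- intros [U [HU Hx]]. exists (fun x => U (pf_mor A B h Hh x)); split; auto. exists U; auto.
      * apply go_union. intros V [U [HU ->]]. apply IH; auto.
    + apply (go_ext _ (fun x => U (pf_mor A B h Hh x))); [intro; apply HUV|exact IH].
  - intros x y H a Ha. simpl in *. apply H; auto.
  - intros x z' H. simpl in H.
    destruct (PFT B HB (gen2 B (proj1_sig x) (fun c => exists d, proj1_sig z' d /\ c = h d))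
                (fun c => exists d, ~ proj1_sig z' d /\ cha_le c (h d))) as [z [H1 H2]].
    + apply gen2_filt; auto; split.
      * apply pin_top.
      * intros; apply (pin_meet B HB); auto.
      * exists cha_top; split; [apply pin_top|symmetry; apply (hom_top A B h Hh)].
      * intros a b [d1 [Hd1 ->]] [d2 [Hd2 ->]]. exists (cha_meet d1 d2); split.
        -- apply (pin_meet A HA); auto.
        -- symmetry; apply (hom_meet A B h Hh).
    + apply Hid.
    + intros c [e1 [e2 [G1 [[d2 [Hd2 ->]] G3]]]] [d [Hd Hcd]]. apply Hd.
      apply (pin_imp A HA z' d2 d Hd2). apply H. simpl. rewrite (hom_imp A B h Hh).
      apply (pin_up B x e1); auto. apply (imp_residual B HB). eapply le_trans'; eauto.
    + exists z; split.
      * intros b Hb. apply H1. exists b, (h cha_top); split; auto. split; [exists cha_top; split; auto; apply pin_top|].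
        apply meet_lb1; auto.
      * apply sig_ext, pred_ext; intro a; simpl. split.
        -- intro Ha. apply NNPP; intro Hn. apply (H2 (h a) Ha). exists a; split; auto. apply le_refl'; auto.
        -- intro Ha. apply H1. exists cha_top, (h a); split; [apply pin_top|split; [exists a; auto|apply meet_lb2; auto]].
  - intros a' Ha' x y H. destruct (pf_clopen_up A HA a' Ha') as [a0 Ha0].
    assert (Hb0 : forall u : PfT B, a' (pf_mor A B h Hh u) <-> theta B (h a0) u).
    { intro u. rewrite (Ha0 (pf_mor A B h Hh u)). unfold theta; simpl; tauto. }
    pose proof (proj1 (Pf_R_char B HB _ (h a0) x y Hb0) H) as H'.
    apply (proj2 (Pf_R_char A HA a' a0 _ _ Ha0)). intros b Hb. simpl in *.
    rewrite (hom_cond A B h Hh) in Hb. auto.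
  - intros a' Ha' x z' H. destruct (pf_clopen_up A HA a' Ha') as [a0 Ha0].
    assert (Hb0 : forall u : PfT B, a' (pf_mor A B h Hh u) <-> theta B (h a0) u).
    { intro u. rewrite (Ha0 (pf_mor A B h Hh u)). unfold theta; simpl; tauto. }
    pose proof (proj1 (Pf_R_char A HA a' a0 _ _ Ha0) H) as H'. simpl in H'.
    destruct (PFT B HB (fun c => proj1_sig x (cha_cond (h a0) c))
                (fun c => exists d, ~ proj1_sig z' d /\ cha_le c (h d)) (cond_filt B HB (h a0) x) (Hid z'))
      as [z [H1 H2]].
    + intros c Hc [d [Hd Hcd]]. apply Hd. apply H'. rewrite (hom_cond A B h Hh).
      eapply (pin_up B x); [exact Hc|]. apply cond_mono; auto.
    + exists z; split.
      * apply (proj2 (Pf_R_char B HB _ (h a0) x z Hb0)). auto.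
      * simpl. intros a Ha. apply NNPP; intro Hn. apply (H2 (h a) Ha). exists a; split; auto. apply le_refl'; auto.
Qed.

Lemma clp_mor_hom (X Y : CESdata) (HX : is_CES X) (HY : is_CES Y) (f : X -> Y) (Hf : is_CES_mor X Y f) :
  is_CHA_hom (ClpUp Y HY) (ClpUp X HX) (clp_mor X Y f Hf).
Proof.
  split; try (intros; apply sig_ext, pred_ext; intro; simpl; tauto).
  - intros a b; apply sig_ext, pred_ext; intro x; simpl. unfold imp_set, downset. split.
    + intros H [z [Hxz [Ha Hb]]]. apply H. exists (f z); split; auto. apply (mor_mono X Y f Hf); auto.
    + intros H [y [Hxy [Ha Hb]]]. destruct (mor_bounded X Y f Hf x y Hxy) as [z [Hxz <-]].
      apply H. exists z; auto.
  - intros a b; apply sig_ext, pred_ext; intro x; simpl. unfold cboxset. split.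
    + intros H z Hz. apply H. apply (mor_R_forth X Y f Hf (proj1_sig a) (proj2_sig a)); auto.
    + intros H y Hy. destruct (mor_R_back X Y f Hf (proj1_sig a) (proj2_sig a) x y Hy) as [z [Hz Hzy]].
      apply (proj2 (proj2_sig b) (f z) y Hzy). apply H; auto.
Qed.

Lemma inv_hom (A B : CHAdata) (h : A -> B) (g : B -> A) : is_CHA_hom A B h ->
  (forall a, g (h a) = a) -> (forall b, h (g b) = b) -> is_CHA_hom B A g.
Proof.
  intros Hh Hgh Hhg. split.
  - rewrite <- (hom_top A B h Hh); auto.
  - rewrite <- (hom_bot A B h Hh); auto.
  - intros x y. rewrite <- (Hhg x), <- (Hhg y), <- (hom_meet A B h Hh), !Hgh; reflexivity.
  - intros x y. rewrite <- (Hhg x), <- (Hhg y), <- (hom_join A B h Hh), !Hgh; reflexivity.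
  - intros x y. rewrite <- (Hhg x), <- (Hhg y), <- (hom_imp A B h Hh), !Hgh; reflexivity.
  - intros x y. rewrite <- (Hhg x), <- (Hhg y), <- (hom_cond A B h Hh), !Hgh; reflexivity.
Qed.

Definition eta (A : CHAdata) (a : A) : ClpT (Pf A) := exist _ (theta A a) (theta_clopen_up A a).

Lemma eta_iso (A : CHAdata) (HA : is_CHA A) (HP : is_CES (Pf A)) : CHA_iso A (ClpUp (Pf A) HP) (eta A).
Proof.
  assert (Hh : is_CHA_hom A (ClpUp (Pf A) HP) (eta A)).
  { split.
    - apply sig_ext, pred_ext; intro p; simpl; unfold theta. split; auto; intros _; apply pin_top.
    - apply sig_ext, pred_ext; intro p; simpl; unfold theta. split; [apply pin_bot|intros []].
    - intros a b; apply sig_ext, pred_ext; intro p; simpl; unfold theta. apply (pin_meet A HA).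
    - intros a b; apply sig_ext, pred_ext; intro p; simpl; unfold theta. apply (pin_join A HA).
    - intros a b; apply sig_ext, pred_ext; intro p; simpl.
      pose proof (pf_down A HA a b p) as E. unfold pfle, imp_set, downset, theta in *; simpl in *.
      split; [intros H1 H2; apply E in H2; tauto|intro H; apply NNPP; intro H'; apply H; apply E; auto].
    - intros a b; apply sig_ext, pred_ext; intro p; simpl.
      pose proof (pf_cbox A HA a b p) as E. unfold cboxset, theta in *; simpl in *. tauto. }
  split; auto.
  set (g := fun U : ClpT (Pf A) => proj1_sig (constructive_indefinite_description _
              (pf_clopen_up A HA (proj1_sig U) (proj2_sig U)))).
  assert (Hg : forall U p, proj1_sig U p <-> theta A (g U) p).
  { intros U p. unfold g. destruct (constructive_indefinite_description _ _) as [a Ha]; simpl; auto. }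
  assert (Hgh : forall a, g (eta A a) = a).
  { intro a. symmetry. apply (theta_inj A HA). intro p. apply (Hg (eta A a) p). }
  assert (Hhg : forall U, eta A (g U) = U).
  { intro U. apply sig_ext, pred_ext; intro p; simpl. symmetry; apply Hg. }
  exists g; split; [apply (inv_hom A (ClpUp (Pf A) HP) (eta A)); auto|split; auto].
Qed.

Theorem theorem4p23 :
  (* Pf sends conditional Heyting algebras to conditional Esakia spaces *)
  (forall A : CHAdata, is_CHA A -> is_CES (Pf A)) /\
  (* ClpUp sends conditional Esakia spaces to conditional Heyting algebras *)
  (forall (X : CESdata) (HX : is_CES X), is_CHA (ClpUp X HX)) /\
  (* Pf sends CHA-morphisms h : A -> B to CES-morphisms h^{-1} : Pf B -> Pf A *)
  (forall (A B : CHAdata) (h : A -> B) (Hh : is_CHA_hom A B h),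
      is_CHA A -> is_CHA B -> is_CES_mor (Pf B) (Pf A) (pf_mor A B h Hh)) /\
  (* ClpUp sends CES-morphisms f : X -> Y to CHA-morphisms f^{-1} *)
  (forall (X Y : CESdata) (HX : is_CES X) (HY : is_CES Y) (f : X -> Y)
      (Hf : is_CES_mor X Y f),
      is_CHA_hom (ClpUp Y HY) (ClpUp X HX) (clp_mor X Y f Hf)) /\
  (* natural isomorphism  A ≅ ClpUp (Pf A) *)
  (exists eta : forall A : CHAdata, A -> ClpT (Pf A),
      (forall (A : CHAdata) (HA : is_CHA A) (HP : is_CES (Pf A)),
          CHA_iso A (ClpUp (Pf A) HP) (eta A)) /\
      (forall (A B : CHAdata) (HA : is_CHA A) (HB : is_CHA B)
         (h : A -> B) (Hh : is_CHA_hom A B h)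
         (Hm : is_CES_mor (Pf B) (Pf A) (pf_mor A B h Hh)) (a : A),
          clp_mor (Pf B) (Pf A) (pf_mor A B h Hh) Hm (eta A a) = eta B (h a))) /\
  (* natural isomorphism  X ≅ Pf (ClpUp X) *)
  (exists eps : forall (X : CESdata) (HX : is_CES X), X -> PfT (ClpUp X HX),
      (forall (X : CESdata) (HX : is_CES X),
          CES_iso X (Pf (ClpUp X HX)) (eps X HX)) /\
      (forall (X Y : CESdata) (HX : is_CES X) (HY : is_CES Y)
         (f : X -> Y) (Hf : is_CES_mor X Y f)
         (Hc : is_CHA_hom (ClpUp Y HY) (ClpUp X HX) (clp_mor X Y f Hf)) (x : X),
          pf_mor (ClpUp Y HY) (ClpUp X HX) (clp_mor X Y f Hf) Hc (eps X HX x)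
          = eps Y HY (f x))).
Proof.
  split; [intros A HA; apply Pf_is_CES; auto|].
  split; [intros X HX; apply ClpUp_is_CHA|].
  split; [intros; apply pf_mor_CES; auto|].
  split; [intros; apply clp_mor_hom|].
  split.
  - exists eta; split; [intros; apply eta_iso; auto|].
    intros; apply sig_ext; reflexivity.
  - exists eps; split.
    + intros X HX; split; [apply eps_mor|].
      exists (epsinv X HX); split; [apply epsinv_mor|split; [apply epsinv_eps|apply eps_epsinv]].
    + intros; apply sig_ext; reflexivity.
Qed.
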